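(* Let $m\ge1$, $q=2^m$, let $n$ be odd, and let $L$ and $\lambda$ be $2$-linear polynomials over $\mathbb F_{q^n}$. Assume that $\mathrm{Tr}(x^{q+1})+L(x)$ is a permutation polynomial of $\mathbb F_{q^n}$. Then $|\ker L|\le q$, and moreover: (i) if $\lambda^\prime(\ker\mathrm{Tr})=\ker\mathrm{Tr}$ and $\mathrm{Tr}(\lambda^\prime(x))=\mathrm{Tr}(x)$ for all $x\in\mathbb F_{q^n}$, then both $\mathrm{Tr}(x^{q+1})+L(\lambda(x))$ and $\mathrm{Tr}(x^{q+1})+\lambda(L(x))$ are permutation polynomials of $\mathbb F_{q^n}$; (ii) if $x\mapsto x+\mathrm{Tr}(\lambda^\prime(x))$ is a permutation of $\mathbb F_q$, then both \[\mathrm{Tr}(x^{q+1})+L(x)+L(\mathrm{Tr}(\lambda(x)))+\mathrm{Tr}(\lambda(x))^2\] and \[\mathrm{Tr}(x^{q+1})+L(x)+\mathrm{Tr}(\lambda(L(x)))+\mathrm{Tr}(\lambda(x^2))\] are permutation polynomials of $\mathbb F_{q^n}$.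
   Context: $\mathrm{Tr}$ denotes the trace map of $\mathbb F_{q^n}$ over $\mathbb F_q$. A $2$-linear polynomial over $\mathbb F_{q^n}$ has the form $\sum_{j=0}^{mn-1}a_jx^{2^j}$; its adjoint is $\sum_j(a_jx)^{2^{-j}}$, where $y\mapsto y^{2^{-j}}$ is the inverse of $y\mapsto y^{2^j}$ on $\mathbb F_{q^n}$. Polynomials are regarded as maps on $\mathbb F_{q^n}$; $\ker$ denotes the kernel of an additive map. *)

(* Defs.v *)
From mathcomp Require Import all_boot all_order all_algebra all_field.
Set Implicit Arguments. Unset Strict Implicit. Unset Printing Implicit Defensive.
Import GRing.Theory.
Local Open Scope ring_scope.

Definition Tr (F : finFieldType) (q n : nat) (x : F) : F :=
  \sum_(i < n) x ^+ (q ^ i).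

Definition lin2 (F : finFieldType) (N : nat) (a : 'I_N -> F) (x : F) : F :=
  \sum_(j < N) a j * x ^+ (2 ^ j).

(* Its adjoint sum_j (a_j x)^{2^{-j}}; when #|F| = 2^N, the inverse of
   y |-> y^{2^j} is y |-> y^{2^(N-j)}. *)
Definition adj2 (F : finFieldType) (N : nat) (a : 'I_N -> F) (x : F) : F :=
  \sum_(j < N) (a j * x) ^+ (2 ^ (N - j)).

Definition kerF (F : finFieldType) (f : F -> F) : {set F} := [set x | f x == 0].

(* Main.v *)
Require Import Defs.
From mathcomp Require Import all_boot all_order all_algebra all_field.
From mathcomp Require Import ring.
Set Implicit Arguments. Unset Strict Implicit. Unset Printing Implicit Defensive.
Import GRing.Theory.
Local Open Scope ring_scope.

Section Gen.
Variable F : finFieldType.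

Lemma nonvanish (r K : nat) : (1 < r)%N -> (0 < K)%N -> (r ^ K.-1 < #|F|)%N ->
  exists x : F, \sum_(i < K) x ^+ (r ^ i) != 0.
Proof.
move=> r1 K0 rK.
pose p : {poly F} := \sum_(i < K) 'X^(r ^ i).
have hp x : p.[x] = \sum_(i < K) x ^+ (r ^ i).
  by rewrite /p horner_sum; apply: eq_bigr => i _; rewrite hornerXn.
have pc : p`_(r ^ K.-1) = 1.
  have hk : (K.-1 < K)%N by rewrite ltn_predL.
  rewrite /p coef_sum (bigD1 (Ordinal hk)) //= coefXn eqxx big1 ?addr0 //.
  move=> i /eqP ne; rewrite coefXn eqn_exp2l //; case: eqP => // e.
  by case: ne; apply: val_inj => /=.
have p0 : p != 0 by apply/eqP => e; move: pc; rewrite e coef0 => /eqP; rewrite eq_sym oner_eq0.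
have sp : (size p <= (r ^ K.-1).+1)%N.
  apply: leq_trans (size_sum _ _ _) _.
  apply/bigmax_leqP => i _; rewrite size_polyXn ltnS leq_exp2l //.
  by rewrite -ltnS prednK.
apply/existsP; apply: contraT; rewrite negb_exists => /forallP H.
have := max_poly_roots p0 (rs := enum F) _ (enum_uniq _).
rewrite -cardE => /(_ _)/leq_trans/(_ sp); rewrite ltnS leqNgt rK; apply.
by apply/allP => x _; rewrite /root hp; have := H x; rewrite negbK.
Qed.
End Gen.

Section Main.
Variables (F : finFieldType) (m n : nat).
Hypotheses (hm : (1 <= m)%N) (hn : odd n) (hF : #|F| = ((2 ^ m) ^ n)%N).

Lemma h2 : (2%N \in [pchar F]).
Proof. by apply: (@card_finPcharP _ _ (m * n)); rewrite // hF expnM. Qed.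

Lemma add2 (x : F) : x + x = 0.
Proof. by apply: addrr_pchar2; exact: h2. Qed.

Lemma frobD k (x y : F) : (x + y) ^+ (2 ^ k) = x ^+ (2 ^ k) + y ^+ (2 ^ k).
Proof.
elim: k => [|k IH]; first by rewrite expn0 !expr1.
by rewrite expnS mulnC !exprM IH sqrrD (mulrn_pchar h2) addr0.
Qed.

Lemma frob0 k : (0 : F) ^+ (2 ^ k) = 0.
Proof. by rewrite expr0n expn_eq0. Qed.

Lemma frob_sum k (I : Type) (r : seq I) (P : pred I) (f : I -> F) :
  (\sum_(i <- r | P i) f i) ^+ (2 ^ k) = \sum_(i <- r | P i) (f i) ^+ (2 ^ k).
Proof. exact: (big_morph (fun x : F => x ^+ (2 ^ k)) (frobD k) (frob0 k)). Qed.

Lemma fixN (x : F) : x ^+ ((2 ^ m) ^ n) = x.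
Proof. by rewrite -hF expf_card. Qed.

Lemma fixN2 (x : F) : x ^+ (2 ^ (m * n)) = x.
Proof. by rewrite expnM fixN. Qed.

Lemma oddmul (c : F) k : odd k -> c *+ k = c.
Proof.
move=> ok; rewrite -[k]odd_double_half ok mulrnDr -muln2 mulnC mulrnA mulr2n add2.
by rewrite mul0rn addr0.
Qed.

Lemma shift_sum K (f : nat -> F) : f K = f 0%N ->
  \sum_(i < K) f i.+1 = \sum_(i < K) f i.
Proof.
case: K => [|K] h; first by rewrite !big_ord0.
rewrite [LHS]big_ord_recr [RHS]big_ord_recl /= h addrC; congr (_ + _).
Qed.

Lemma n0 : (0 < n)%N. Proof. by case: n hn. Qed.

Local Notation q := (2 ^ m)%N.
Local Notation T := (@Tr F (2 ^ m) n).

Lemma T_add x y : T (x + y) = T x + T y.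
Proof. by rewrite /Tr -big_split; apply: eq_bigr => i _; rewrite -expnM frobD. Qed.

Lemma T_0 : T 0 = 0.
Proof. by rewrite /Tr big1 // => i _; rewrite -expnM frob0. Qed.

Lemma T_frob x : T (x ^+ q) = T x.
Proof.
rewrite /Tr; under eq_bigr do rewrite -exprM -expnS.
rewrite (@shift_sum n (fun i => x ^+ (q ^ i))) //; by rewrite fixN expn0 expr1.
Qed.

Lemma T_frobk k x : T (x ^+ (q ^ k)) = T x.
Proof. by elim: k => [|k IH]; rewrite ?expn0 ?expr1 // expnSr exprM T_frob. Qed.

Lemma T_inFq x : (T x) ^+ q = T x.
Proof.
rewrite -[RHS]T_frob /Tr frob_sum; apply: eq_bigr => i _.
by rewrite -!exprM mulnC.
Qed.

Lemma fixk (c : F) k : c ^+ q = c -> c ^+ (q ^ k) = c.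
Proof. by move=> h; elim: k => [|k IH]; rewrite ?expn0 ?expr1 // expnSr exprM IH. Qed.

Lemma T_scal c x : c ^+ q = c -> T (c * x) = c * T x.
Proof.
move=> h; rewrite /Tr mulr_sumr; apply: eq_bigr => i _.
rewrite exprMn. rewrite (fixk _ h). by [].
Qed.

Lemma T_const c : c ^+ q = c -> T c = c.
Proof.
move=> h; rewrite /Tr (eq_bigr (fun _ => c)) ?sumr_const ?card_ord ?oddmul //.
by move=> i _; rewrite fixk.
Qed.


Definition Tr2 (x : F) := \sum_(i < m * n) x ^+ (2 ^ i).

Lemma T2_add x y : Tr2 (x + y) = Tr2 x + Tr2 y.
Proof. by rewrite /Tr2 -big_split; apply: eq_bigr => i _; rewrite frobD. Qed.

Lemma T2_0 : Tr2 0 = 0.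
Proof. by rewrite /Tr2 big1 // => i _; rewrite frob0. Qed.

Lemma T2_sum (I : Type) (r : seq I) (P : pred I) (f : I -> F) :
  Tr2 (\sum_(i <- r | P i) f i) = \sum_(i <- r | P i) Tr2 (f i).
Proof. exact: (big_morph Tr2 T2_add T2_0). Qed.

Lemma T2_frob x : Tr2 (x ^+ 2) = Tr2 x.
Proof.
rewrite /Tr2; under eq_bigr do rewrite -exprM -expnS.
by rewrite (@shift_sum (m * n) (fun i => x ^+ (2 ^ i))) // fixN2 expn0 expr1.
Qed.

Lemma T2_frobk k x : Tr2 (x ^+ (2 ^ k)) = Tr2 x.
Proof. by elim: k => [|k IH]; rewrite ?expn0 ?expr1 // expnSr exprM T2_frob. Qed.

Lemma T2_Tr c y : c ^+ q = c -> Tr2 (c * T y) = Tr2 (c * y).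
Proof.
move=> h; rewrite /Tr mulr_sumr T2_sum.
rewrite (eq_bigr (fun _ => Tr2 (c * y))) ?sumr_const ?card_ord ?oddmul //.
move=> i _; rewrite -{1}(fixk i h) -exprMn -expnM; exact: T2_frobk.
Qed.

Lemma T2_adj (b : 'I_(m * n) -> F) x y :
  Tr2 (y * lin2 b x) = Tr2 (adj2 b y * x).
Proof.
rewrite /lin2 /adj2 mulr_sumr mulr_suml !T2_sum; apply: eq_bigr => j _.
rewrite -(T2_frobk j ((b j * y) ^+ (2 ^ (m * n - j)) * x)) exprMn -exprM -expnD.
rewrite subnK ?fixN2; last exact: ltnW.
by congr Tr2; rewrite mulrA [y * b j]mulrC.
Qed.

Lemma mn0 : (0 < m * n)%N.
Proof. by rewrite muln_gt0 hm n0. Qed.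

Lemma T2_nondeg : exists y, Tr2 y != 0.
Proof.
apply: nonvanish => //; first exact: mn0.
by rewrite hF -expnM ltn_exp2l // ltn_predL mn0.
Qed.

Lemma T2_sep c : (forall x, Tr2 (c * x) = 0) -> c = 0.
Proof.
move=> H; apply/eqP; apply: contraT => c0.
have [y /eqP y0] := T2_nondeg; case: y0.
by rewrite -(H (c^-1 * y)) mulVKf.
Qed.

Lemma q1 : (1 < q)%N.
Proof. by rewrite -{1}(expn0 2) ltn_exp2l. Qed.

Lemma T_nondeg : exists y, T y != 0.
Proof.
apply: nonvanish; [exact: q1 | exact: n0 |].
by rewrite hF ltn_exp2l ?q1 // ltn_predL n0.
Qed.

Lemma T_surj w d : w != 0 -> d ^+ q = d -> exists x, T (x * w) = d.
Proof.
move=> w0 dq; have [y0 t0] := T_nondeg.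
exists (d / T y0 * y0 / w); rewrite divfK // T_scal ?divfK //.
by rewrite exprMn exprVn T_inFq dq.
Qed.

Lemma Fq_card : (#|[set x : F | x ^+ q == x]| <= q)%N.
Proof.
pose p : {poly F} := 'X^q - 'X.
have sp : size p = q.+1.
  rewrite /p size_addl ?size_polyXn // size_opp size_polyX ltnS; exact: q1.
have p0 : p != 0 by rewrite -size_poly_eq0 sp.
have := max_poly_roots p0 (rs := enum [set x : F | x ^+ q == x]) _ (enum_uniq _).
rewrite -cardE sp ltnS; apply; apply/allP => x.
rewrite mem_enum inE /root /p !hornerE => /eqP ->; by rewrite subrr.
Qed.


Lemma char2_eq (u v : F) : u + v = 0 -> u = v.
Proof. by move=> h; rewrite -[v]add0r -h -addrA add2 addr0. Qed.

Lemma Fq_add (u v : F) : u ^+ q = u -> v ^+ q = v -> (u + v) ^+ q = u + v.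
Proof. by move=> hu hv; rewrite frobD hu hv. Qed.

Lemma Q_add (x a : F) : T ((x + a) ^+ q.+1) =
  T (x ^+ q.+1) + T (x ^+ q * a) + T (x * a ^+ q) + T (a ^+ q.+1).
Proof.
rewrite !exprSr frobD mulrDl !mulrDr !T_add [a ^+ q * x]mulrC.
by rewrite -!addrA; congr (_ + _); rewrite addrC -!addrA; congr (_ + _); rewrite addrC.
Qed.

Lemma T_cyc (x a : F) : T (x ^+ q * a) = T (x * a ^+ (q ^ n.-1)).
Proof.
rewrite -(T_frobk n.-1 (x ^+ q * a)) exprMn -exprM -expnS prednK ?n0 //.
by rewrite fixN.
Qed.

Lemma fixe (c : F) e k : c ^+ e = c -> c ^+ (e ^ k) = c.
Proof. by move=> h; elim: k => [|k IH]; rewrite ?expn0 ?expr1 // expnSr exprM IH. Qed.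

Lemma w_neq0 (a : F) : a ^+ q != a -> a ^+ (q ^ n.-1) + a ^+ q != 0.
Proof.
move=> na; apply: contra na => /eqP /char2_eq e.
have e2 : a ^+ (q ^ 2) = a.
  by rewrite expnS expn1 exprM -e -exprM -expnSr prednK ?n0 // fixN.
rewrite -{2}(fixN a) -[n]odd_double_half hn -muln2 mulnC expnD expn1 expnM exprM.
by apply/eqP; rewrite (@fixe (a ^+ q) (q * q)) // exprAC mulnn e2.
Qed.

Lemma M0 (M : F -> F) : (forall x y, M (x + y) = M x + M y) -> M 0 = 0.
Proof. by move=> Ma; apply: (@addrI _ (M 0)); rewrite -Ma !addr0. Qed.

Lemma charB (M : F -> F) : (forall x y, M (x + y) = M x + M y) ->
  (forall a, a != 0 -> (a ^+ q = a -> M a != a ^+ 2) /\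
                      (a ^+ q != a -> M a ^+ q != M a)) ->
  injective (fun x => T (x ^+ q.+1) + M x).
Proof.
move=> Ma cond x y /= exy.
have ey : y = x + (x + y) by rewrite addrA add2 add0r.
have [a0 | a0] := eqVneq (x + y) 0.
  by rewrite ey a0 addr0.
move: exy; rewrite ey Q_add Ma; set a := x + y.
set t1 := T (x ^+ q * a); set t2 := T (x * a ^+ q); set t3 := T (a ^+ q.+1).
set Qx := T (x ^+ q.+1) => exy.
have eMa : M a = t1 + t2 + t3.
  apply: char2_eq; apply: (@addrI _ (Qx + M x)).
  rewrite {1}exy addr0.
  transitivity (Qx + M x + ((t1 + t1) + (t2 + t2) + (t3 + t3) + (M a + M a))); first by ring.
  by rewrite !add2 !addr0.
have [c1 c2] := cond a a0.
have [aq | aq] := eqVneq (a ^+ q) a.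
  case/negP: (c1 aq); apply/eqP; rewrite eMa.
  rewrite /t1 /t2 /t3 -{1}aq -exprMn T_frob aq add2 add0r exprSr aq -expr2 T_const //.
  by rewrite -exprM mulnC exprM aq.
case/negP: (c2 aq); apply/eqP; rewrite eMa /t1 /t2 /t3.
by apply: Fq_add; [apply: Fq_add|]; apply: T_inFq.
Qed.

Lemma charA (M : F -> F) : (forall x y, M (x + y) = M x + M y) ->
  injective (fun x => T (x ^+ q.+1) + M x) ->
  (forall a, a != 0 -> (a ^+ q = a -> M a != a ^+ 2) /\
                      (a ^+ q != a -> M a ^+ q != M a)).
Proof.
move=> Ma inj a a0; split.
  move=> aq; apply/eqP => e; case/eqP: a0; apply: inj => /=.
  rewrite M0 // expr0n /= T_0 addr0 e exprSr aq -expr2 T_const ?add2 //.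
  by rewrite exprAC aq.
move=> aq; apply/negP => /eqP e.
have [x hx] := T_surj (w_neq0 aq) (Fq_add (T_inFq (a ^+ q.+1)) e).
have : x + a = x.
  move: hx; rewrite mulrDr T_add => hx.
  apply: inj => /=; rewrite Q_add Ma T_cyc [x * a ^+ q]mulrC.
  set s1 := T (x * a ^+ (q ^ n.-1)); set s2 := T (a ^+ q * x).
  set Qa := T (a ^+ q.+1); set Qx := T (x ^+ q.+1).
  move: hx; rewrite -/s1 [x * a ^+ q]mulrC -/s2 => hx.
  transitivity (Qx + M x + ((s1 + s2) + (Qa + M a))); first by ring.
  by rewrite hx add2 addr0.
by move/eqP; rewrite -subr_eq0 addrC addKr => /eqP a00; case/eqP: a0.
Qed.


Definition condM (M : F -> F) := forall a, a != 0 ->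
  (a ^+ q = a -> M a != a ^+ 2) /\ (a ^+ q != a -> M a ^+ q != M a).

Definition addf (M : F -> F) := forall x y, M (x + y) = M x + M y.

Lemma sq_add (x y : F) : (x + y) ^+ 2 = x ^+ 2 + y ^+ 2.
Proof. by have := frobD 1 x y; rewrite expn1. Qed.

Lemma lin2_add (b : 'I_(m * n) -> F) : addf (lin2 b).
Proof.
by move=> x y; rewrite /lin2 -big_split; apply: eq_bigr => j _; rewrite frobD mulrDr.
Qed.

Lemma adj2_add (b : 'I_(m * n) -> F) : addf (adj2 b).
Proof.
by move=> x y; rewrite /adj2 -big_split; apply: eq_bigr => j _; rewrite mulrDr frobD.
Qed.

Lemma T_addf : addf T. Proof. exact: T_add. Qed.

Lemma Fq0 : (0 : F) ^+ q = 0.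
Proof. by rewrite expr0n expn_eq0. Qed.

Lemma ker_bound (L : F -> F) : addf L -> condM L -> (#|kerF L| <= q)%N.
Proof.
move=> La cL; apply: leq_trans (Fq_card); apply: subset_leq_card.
apply/subsetP => x; rewrite !inE => /eqP Lx.
have [-> | x0] := eqVneq x 0; first by rewrite Fq0.
apply: contraT => nx; have := proj2 (cL x x0) nx; by rewrite Lx Fq0 eqxx.
Qed.

Lemma dual_i (lam lam' : F -> F) : addf lam -> addf lam' ->
  (forall x y, Tr2 (y * lam x) = Tr2 (lam' y * x)) ->
  [set lam' x | x in kerF T] = kerF T -> (forall x, T (lam' x) = T x) ->
  (forall c, c ^+ q = c -> lam c = c) /\ injective lam.
Proof.
move=> la la' adj H1 H2; split.
  move=> c cq; symmetry; apply: char2_eq; apply: T2_sep => x.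
  rewrite mulrDl T2_add [c * x]mulrC [lam c * x]mulrC adj [lam' x * c]mulrC.
  by rewrite -(T2_Tr (lam' x) cq) H2 (T2_Tr x cq) [c * x]mulrC add2.
have l'0 := M0 la'; have l0 := M0 la.
have l'inj : injective lam'.
  move=> x y e; apply: char2_eq.
  have z0 : lam' (x + y) = 0 by rewrite la' e add2.
  have hK : {in kerF T &, injective lam'}.
    by apply/imset_injP; rewrite H1.
  apply: hK; rewrite ?inE ?z0 ?l'0 //.
  by rewrite -H2 z0 T_0.
  by rewrite T_0.
have [g gK Kg] := injF_bij l'inj.
move=> x y e; apply: char2_eq; apply: T2_sep => w.
have z0 : lam (x + y) = 0 by rewrite la e add2.
by rewrite -(Kg w) mulrC -adj z0 mulr0 T2_0.
Qed.

Lemma dual_ii (lam lam' : F -> F) : addf lam -> addf lam' ->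
  (forall x y, Tr2 (y * lam x) = Tr2 (lam' y * x)) ->
  (forall x : F, x ^+ q = x -> (x + T (lam' x)) ^+ q = x + T (lam' x)) ->
  {in [pred x : F | x ^+ q == x] &, injective (fun x : F => x + T (lam' x))} ->
  forall v, v ^+ q = v -> v + T (lam v) = 0 -> v = 0.
Proof.
move=> la la' adj G1 G2 v vq hv; apply/eqP; apply: contraT => v0.
have tv : T (lam v) = v by symmetry; apply: char2_eq.
have claim u : u ^+ q = u -> Tr2 (v * (u + T (lam' u))) = 0.
  move=> uq; rewrite mulrDr T2_add (T2_Tr _ vq) [v * lam' u]mulrC -adj -(T2_Tr (lam v) uq) tv.
  by rewrite [u * v]mulrC add2.
pose S := [set x : F | x ^+ q == x].
pose g := fun x : F => x + T (lam' x).
have gS : g @: S = S.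
  apply/eqP; rewrite eqEcard; apply/andP; split.
    apply/subsetP => y /imsetP [x]; rewrite inE => /eqP xq ->.
    by rewrite inE G1.
  rewrite (eqP (introT imset_injP _)) //.
  by move=> x y; rewrite !inE => hx hy; apply: G2.
have [y0 y00] := T2_nondeg.
have wS : v^-1 * T y0 \in S.
  by rewrite inE exprMn exprVn vq T_inFq.
move: wS; rewrite -gS => /imsetP [u]; rewrite inE => /eqP uq ew.
case/negP: y00; apply/eqP.
have := claim u uq; rewrite -/(g u) -ew mulrA mulfV // mul1r.
by rewrite -[T y0]mul1r T2_Tr ?expr1n // mul1r.
Qed.


Lemma part_i (L lam : F -> F) : addf L -> addf lam -> condM L ->
  (forall c, c ^+ q = c -> lam c = c) -> injective lam ->
  condM (fun x => L (lam x)) /\ condM (fun x => lam (L x)).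
Proof.
move=> La la cL lfix linj.
have back x : (lam x) ^+ q = lam x -> x ^+ q = x.
  by move=> h; have := lfix _ h => /linj e; rewrite -e.
split=> a a0; split.
- by move=> aq /=; rewrite lfix //; exact: (proj1 (cL a a0) aq).
- move=> aq /=; have nq : lam a ^+ q != lam a.
    by apply: contra aq => /eqP /back ->.
  have la0 : lam a != 0 by apply: contra nq => /eqP ->; rewrite Fq0.
  exact: (proj2 (cL _ la0) nq).
- move=> aq /=; apply/negP => /eqP e.
  have a2 : lam (a ^+ 2) = a ^+ 2 by apply: lfix; rewrite exprAC aq.
  move: e; rewrite -a2 => /linj e; case/negP: (proj1 (cL a a0) aq); rewrite e.
  by [].
- move=> aq /=; apply: contra (proj2 (cL a a0) aq) => /eqP /back ->.
  by [].
Qed.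

Lemma part_ii (L lam : F -> F) : addf L -> addf lam -> condM L ->
  (forall v, v ^+ q = v -> v + T (lam v) = 0 -> v = 0) ->
  condM (fun x => L x + L (T (lam x)) + (T (lam x)) ^+ 2) /\
  condM (fun x => L x + T (lam (L x)) + T (lam (x ^+ 2))).
Proof.
move=> La la cL hker.
have sq_q (z : F) : z ^+ q = z -> (z ^+ 2) ^+ q = z ^+ 2 by move=> h; rewrite exprAC h.
split=> a a0 /=.
  set t := T (lam a); have tq : t ^+ q = t by exact: T_inFq.
  rewrite -La.
  have canc (u w : F) : u + w + w = u by rewrite -addrA add2 addr0.
  split.
    move=> aq.
    have at0 : a + t != 0.
      apply/eqP => e; case/eqP: a0; exact: (hker a aq e).
    have atq : (a + t) ^+ q = a + t by rewrite Fq_add.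
    apply: contra (proj1 (cL _ at0) atq) => /eqP e.
    by rewrite sq_add -e canc.
  move=> aq.
  have atq : (a + t) ^+ q != a + t.
    by apply: contra aq => /eqP h; rewrite -(canc a t) Fq_add.
  have at0 : a + t != 0 by apply: contra atq => /eqP ->; rewrite Fq0.
  apply: contra (proj2 (cL _ at0) atq) => /eqP h.
  by apply/eqP; rewrite -(canc (L (a + t)) (t ^+ 2)) Fq_add ?sq_q.
set s := T (lam (L a)) + T (lam (a ^+ 2)).
have sq : s ^+ q = s by rewrite Fq_add ?T_inFq.
have canc (u w : F) : u + w + w = u by rewrite -addrA add2 addr0.
rewrite -addrA -/s.
split=> aq.
  apply/negP => /eqP e.
  pose w := L a + a ^+ 2.
  have hw : w + T (lam w) = 0.
    rewrite /w la T_add -/s.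
    transitivity ((L a + s) + a ^+ 2); first by ring.
    by rewrite e add2.
  have wq : w ^+ q = w.
    have -> : w = T (lam w) by apply: char2_eq.
    exact: T_inFq.
  have := hker w wq hw => /char2_eq e2.
  by case/negP: (proj1 (cL a a0) aq); rewrite e2.
apply: contra (proj2 (cL a a0) aq) => /eqP h.
by apply/eqP; rewrite -(canc (L a) s) Fq_add.
Qed.


Lemma main_sec (a b : 'I_(m * n) -> F) :
  let q := (2 ^ m)%N in
  let L := lin2 a in
  let lam := lin2 b in
  let lam' := adj2 b in
  let T := Tr q n in
  bijective (fun x : F => T (x ^+ (q + 1)) + L x) ->
  (#|kerF L| <= q)%N /\
  ((([set lam' x | x in kerF T] = kerF T) /\ (forall x, T (lam' x) = T x)) ->
     bijective (fun x : F => T (x ^+ (q + 1)) + L (lam x)) /\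
     bijective (fun x : F => T (x ^+ (q + 1)) + lam (L x))) /\
  (((forall x : F, x ^+ q = x -> (x + T (lam' x)) ^+ q = x + T (lam' x)) /\
    {in [pred x : F | x ^+ q == x] &, injective (fun x : F => x + T (lam' x))}) ->
     bijective (fun x : F => T (x ^+ (q + 1)) + L x + L (T (lam x)) + (T (lam x)) ^+ 2) /\
     bijective (fun x : F => T (x ^+ (q + 1)) + L x + T (lam (L x)) + T (lam (x ^+ 2)))).
Proof.
cbv zeta; rewrite !addn1 => hPP.
have La := lin2_add a; have la := lin2_add b; have la' := adj2_add b.
have cL := charA La (bij_inj hPP).
split; first exact: ker_bound La cL.
split.
  case=> H1 H2; have [lfix linj] := dual_i la la' (@T2_adj b) H1 H2.
  have [c1 c2] := part_i La la cL lfix linj.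
  split; apply: injF_bij; apply: charB => //.
    by move=> x y; rewrite la La.
  by move=> x y; rewrite La la.
case=> G1 G2; have hker := dual_ii la la' (@T2_adj b) G1 G2.
have [c1 c2] := part_ii La la cL hker.
split; apply: injF_bij.
  apply: eq_inj (charB _ c1) _; last by move=> x /=; rewrite !addrA.
  by move=> x y; rewrite la T_add !La sq_add; ring.
apply: eq_inj (charB _ c2) _; last by move=> x /=; rewrite !addrA.
by move=> x y; rewrite La sq_add !la !T_add; ring.
Qed.

End Main.

Unset Implicit Arguments.
Set Strict Implicit.

Theorem mainTheorem9 (F : finFieldType) (m n : nat)
  (hm : (1 <= m)%N) (hn : odd n) (hF : #|F| = ((2 ^ m) ^ n)%N)
  (a b : 'I_(m * n) -> F) :
  let q := (2 ^ m)%N in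
  let L := lin2 a in
  let lam := lin2 b in
  let lam' := adj2 b in
  let T := Tr q n in
  bijective (fun x : F => T (x ^+ (q + 1)) + L x) ->
  (#|kerF L| <= q)%N /\
  ((([set lam' x | x in kerF T] = kerF T) /\ (forall x, T (lam' x) = T x)) ->
     bijective (fun x : F => T (x ^+ (q + 1)) + L (lam x)) /\
     bijective (fun x : F => T (x ^+ (q + 1)) + lam (L x))) /\
  (((forall x : F, x ^+ q = x -> (x + T (lam' x)) ^+ q = x + T (lam' x)) /\
    {in [pred x : F | x ^+ q == x] &, injective (fun x : F => x + T (lam' x))}) ->
     bijective (fun x : F => T (x ^+ (q + 1)) + L x + L (T (lam x)) + (T (lam x)) ^+ 2) /\
     bijective (fun x : F => T (x ^+ (q + 1)) + L x + T (lam (L x)) + T (lam (x ^+ 2)))).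
Proof. exact: main_sec. Qed.
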